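(* Let $q$ be a prime power and let $d,\tau,n,m$ be integers with $\lfloor (d-1)/2\rfloor+1\le\tau<d\le n\le m$ and $\tau\le n-\tau$. Then there exist a code $\mathcal C\subseteq\mathbb F_{q^m}^n$ with minimum rank distance at least $d$ and a word $\mathbf r\in\mathbb F_{q^m}^n$ such that $$\max_{\mathbf y\in\mathbb F_{q^m}^n}|\mathcal C\cap\mathcal B_\tau(\mathbf y)|\ \ge\ |\mathcal C\cap\mathcal B_\tau(\mathbf r)|\ \ge\ q^{(n-\tau)(\tau-\lfloor (d-1)/2\rfloor)}.$$
   Context: Fixing a basis of $\mathbb F_{q^m}$ over $\mathbb F_q$, each vector in $\mathbb F_{q^m}^n$ is identified with an $m\times n$ matrix over $\mathbb F_q$; $\mathrm{rk}$ denotes the rank of this matrix. The minimum rank distance of $\mathcal C$ is $\min\{\mathrm{rk}(\mathbf c_1-\mathbf c_2):\mathbf c_1\neq\mathbf c_2\in\mathcal C\}$, and $\mathcal B_\tau(\mathbf r)=\{\mathbf x:\mathrm{rk}(\mathbf x-\mathbf r)\le\tau\}$. Codes are not required to be linear. *)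

(* Defs.v *)
From HB Require Import structures.
From mathcomp Require Import all_boot all_order all_algebra all_field.
Set Implicit Arguments. Unset Strict Implicit. Unset Printing Implicit Defensive.
Import GRing.Theory.
Local Open Scope ring_scope.

(* The field extension L of F (L = F_{q^m} when #|F| = q and \dim {:L} = m). *)
Definition coordmx (F : fieldType) (L : fieldExtType F) (n : nat)
  (x : 'rV[L]_n) : 'M[F]_(\dim {:L}, n) :=
  \matrix_(i, j) coord (vbasis {:L}) i (x 0 j).

Definition rk (F : fieldType) (L : fieldExtType F) (n : nat) (x : 'rV[L]_n) : nat :=
  \rank (coordmx x).

Definition min_rank_dist_ge (F : fieldType) (L : fieldExtType F) (n : nat)
  (C : seq 'rV[L]_n) (d : nat) : Prop :=
  forall c1 c2, c1 \in C -> c2 \in C -> c1 != c2 -> (d <= rk (c1 - c2))%N.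

(* |C ∩ B_tau(r)| for a duplicate-free list C *)
Definition ball_count (F : fieldType) (L : fieldExtType F) (n : nat)
  (C : seq 'rV[L]_n) (tau : nat) (r : 'rV[L]_n) : nat :=
  count (fun x => (rk (x - r) <= tau)%N) C.

(* Main.v *)
Require Import Defs.
From HB Require Import structures.
From mathcomp Require Import all_boot all_order all_algebra all_field.
From mathcomp Require Import zify.
From Stdlib Require Import Classical.
Set Implicit Arguments. Unset Strict Implicit. Unset Printing Implicit Defensive.
Import GRing.Theory.
Local Open Scope ring_scope.


Lemma exK (F : finFieldType) (N : nat) : (0 < N)%N ->
  exists K : fieldExtType F, \dim {:K} = N.
Proof.
move=> N_gt0.
set Q := (#|F| ^ N)%N.
have q_gt1 : (1 < #|F|)%N by apply: finNzRing_gt1.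
have Q_gt1 : (1 < Q)%N by rewrite /Q -(exp1n N) ltn_exp2r.
have Q_gt0 := ltnW Q_gt1; have Q1_gt0: (Q.-1 > 0)%N by rewrite -ltnS prednK.
pose pq (R : nzRingType) : {poly R} := 'X^Q - 'X.
have Dq (R : nzRingType) : pq R = ('X^(Q.-1) - 1) * ('X - 0).
  by rewrite subr0 mulrBl mul1r -exprSr prednK.
have /FinSplittingFieldFor[/= L splitLq]: pq F != 0.
  by rewrite Dq monic_neq0 ?rpredM ?monicXsubC ?monicXnsubC.
rewrite [map_poly _ _]rmorphB rmorphXn /= map_polyX -/(pq L) in splitLq.
have [p pr_p pcharFp] := finPcharP F.
have pcharL: p \in [pchar L] by rewrite pchar_lalg.
pose Fm := FinFieldExtType L.
have /finField_galois_generator[/= a _ Da]: (1 <= {:L})%VS by apply: sub1v.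
pose Em := fixedSpace (a ^+ N)%g; rewrite dimv1 expn1 in Da.
have{splitLq} [zs DqL defL] := splitLq.
have QR0 : (Q%:R : L) = 0.
  have cF : #|F| = (p ^ logn p #|F|)%N := card_pprimeChar pcharFp.
  case E: (logn p #|F|) cF => [|e] cF; first by move: q_gt1; rewrite cF.
  rewrite /Q cF -expnM natrX pcharf0 // expr0n muln_eq0 /=.
  by rewrite gtn_eqF.
have Uzs: uniq zs.
  rewrite -separable_prod_XsubC -(eqp_separable DqL) Dq separable_root andbC.
  rewrite /root !hornerE subr_eq0 eq_sym expr0n gtn_eqF ?oner_eq0 //=.
  rewrite cyclotomic.separable_Xn_sub_1 // -subn1 natrB // subr_eq0.
  by rewrite QR0 eq_sym oner_eq0.
have cardFm : #|Fm| = Q.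
  suffices /eq_card->: Fm =i zs.
    apply: succn_inj; rewrite (card_uniqP _) //= -(size_prod_XsubC _ id).
    by rewrite -(eqp_size DqL) size_polyDl size_polyXn // size_polyN size_polyX.
  have in_zs: zs =i Em.
    move=> z; rewrite -root_prod_XsubC -(eqp_root DqL) (sameP fixedSpaceP eqP).
    rewrite /root !hornerE subr_eq0 /= /Q; congr (_ == z).
    elim: (N) => [|i IHi]; first by rewrite gal_id.
    by rewrite expgSr expnSr exprM IHi galM ?Da ?memvf.
  suffices defEm: Em = {:L}%VS by move=> z; rewrite in_zs defEm memvf.
  apply/eqP; rewrite eqEsubv subvf -defL -[Em]subfield_closed agenvS //.
  by rewrite subv_add sub1v; apply/span_subvP=> z; rewrite in_zs.
exists L.
have := card_vspacef (Vector.class (finvect_type L)).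
move=> H; apply: (@expnI #|F|) => //; rewrite -/Q -cardFm -H card_vspace //.
Qed.


Section Frob.
Variables (F : finFieldType) (K : fieldExtType F).

Lemma frobF (c : F) i : c ^+ (#|F| ^ i) = c.
Proof.
elim: i => [|i IH]; first by rewrite expr1.
by rewrite expnSr exprM IH expf_card.
Qed.

Lemma frobD i (x y : K) : (x + y) ^+ (#|F| ^ i) = x ^+ (#|F| ^ i) + y ^+ (#|F| ^ i).
Proof.
have [p pr_p pcharFp] := finPcharP F.
have pcharK: p \in [pchar K] by rewrite pchar_lalg.
have cF : #|F| = (p ^ logn p #|F|)%N := card_pprimeChar pcharFp.
rewrite cF -expnM. rewrite exprDn_pchar //.
by rewrite pnatX (pnatE _ pr_p) pcharK.
Qed.

Lemma frobZ i (c : F) (x : K) : (c *: x) ^+ (#|F| ^ i) = c *: x ^+ (#|F| ^ i).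
Proof.
by rewrite exprZn frobF.
Qed.

Lemma frob_sum i (I : finType) (w : I -> F) (v : I -> K) :
  (\sum_j w j *: v j) ^+ (#|F| ^ i) = \sum_j w j *: v j ^+ (#|F| ^ i).
Proof.
elim/big_rec2: _ => [|j a b _ <-]; first by rewrite expr0n expn_eq0 gtn_eqF // ltnW // finNzRing_gt1.
by rewrite frobD frobZ.
Qed.
End Frob.

Section Gab.
Variables (F : finFieldType) (K : fieldExtType F) (k tau : nat).
Hypothesis htau : (tau <= \dim {:K})%N.
Local Notation Nk := (\dim {:K}).
Local Notation e := (vbasis {:K}).
Local Notation q := #|F|.

Definition cof (X : 'M[F]_(k, Nk)) (i : 'I_k) : K := \sum_l X i l *: e`_l.
Definition fX (X : 'M[F]_(k, Nk)) (y : K) : K := \sum_(i < k) cof X i * y ^+ (q ^ i).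
Definition BX (X : 'M[F]_(k, Nk)) : 'M[F]_(Nk, tau) :=
  \matrix_(l, j) coord e l (fX X e`_j).

Lemma free_e : free e.
Proof. exact: basis_free (vbasisP _). Qed.

Lemma cofB X X' i : cof (X - X') i = cof X i - cof X' i.
Proof.
rewrite /cof -sumrB; apply: eq_bigr => l _; by rewrite !mxE scalerBl.
Qed.

Lemma fXB X X' y : fX (X - X') y = fX X y - fX X' y.
Proof.
rewrite /fX -sumrB; apply: eq_bigr => i _; by rewrite cofB mulrBl.
Qed.

Lemma BXB X X' : BX (X - X') = BX X - BX X'.
Proof. by apply/matrixP => l j; rewrite !mxE fXB linearB. Qed.

Lemma fX_lin X (w : 'I_tau -> F) :
  fX X (\sum_j w j *: e`_j) = \sum_j w j *: fX X e`_j.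
Proof.
rewrite /fX; under eq_bigr do rewrite frob_sum mulr_sumr.
rewrite exchange_big; apply: eq_bigr => j _; rewrite scaler_sumr.
by apply: eq_bigr => i _; rewrite scalerAr.
Qed.

Lemma cf (i : 'I_tau) (l : 'I_Nk) :
  coord e l e`_i = (i == l :> nat)%:R.
Proof. by have := coord_free (widen_ord htau i) l free_e. Qed.

Lemma coord_vecw (w : 'I_tau -> F) j :
  coord e (widen_ord htau j) (\sum_j0 w j0 *: e`_j0) = w j.
Proof.
rewrite linear_sum (bigD1 j) //= linearZ /= cf /= eqxx mulr1.
rewrite big1 ?addr0 // => j0 nj0; rewrite linearZ /= cf /=.
have -> : (j0 == j :> nat) = false by exact: negbTE nj0.
by rewrite mulr0.
Qed.

Lemma cof0 X : (forall i, cof X i = 0) -> X = 0.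
Proof.
move=> H; apply/matrixP => i l; rewrite mxE.
by have := coord_sum_free (X i) l free_e; rewrite -/(cof X i) H linear0.
Qed.

Lemma rank_BX X : X != 0 -> (tau < \rank (BX X) + k)%N.
Proof.
move=> nzX; rewrite ltnNge; apply/negP => hle.
have q_gt1 : (1 < q)%N by apply: finNzRing_gt1.
have [i0 nzc] : exists i0, cof X i0 != 0.
  case: (pickP (fun i => cof X i != 0)) => [i0 H|H]; first by exists i0.
  by move: nzX; rewrite (cof0 (fun i => eqP (negbFE (H i)))) eqxx.
have k_gt0 : (0 < k)%N by case: i0 {nzc} => [i hi]; apply: leq_ltn_trans hi.
set A := (BX X)^T.
set r := \rank (kermx A).
have hr : (k <= r)%N by rewrite /r mxrank_ker mxrank_tr; lia.
set W := row_base (kermx A).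
pose y (u : 'rV[F]_r) : K := \sum_(j < tau) (u *m W) 0 j *: e`_j.
have yroot u : fX X (y u) = 0.
  rewrite fX_lin; set v := (X in X = 0).
  rewrite (coord_vbasis (memvf v)) big1 // => l _.
  have H0 : (u *m W) *m A = 0.
    by apply/sub_kermxP; rewrite (submx_trans (submxMl _ _)) // eq_row_base.
  suff -> : coord e l v = 0 by rewrite scale0r.
  have := congr1 (fun M : 'M[F]_(1, Nk) => M 0 l) H0; rewrite !mxE => <-.
  rewrite /v linear_sum; apply: eq_bigr => j _; by rewrite linearZ /= !mxE.
have yinj : injective y.
  move=> u u' eq; apply: (row_free_inj (row_base_free (kermx A))).
  apply/rowP => j.
  by have := congr1 (coord e (widen_ord htau j)) eq; rewrite !coord_vecw.
pose P := \sum_(i < k) cof X i *: 'X^(q ^ i).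
have hP y0 : P.[y0] = fX X y0.
  by rewrite horner_sum; apply: eq_bigr => i _; rewrite hornerZ hornerXn.
have Pnz : P != 0.
  apply/eqP => P0; have := congr1 (fun p : {poly K} => p`_(q ^ i0)) P0.
  rewrite coef_sumMXn coef0.
  under eq_bigl do rewrite eqn_exp2l //.
  by rewrite big_pred1_eq; apply/eqP.
have hsize : (size P <= (q ^ k.-1).+1)%N.
  apply: leq_trans (size_sum _ _ _) _; apply/bigmax_leqP => i _.
  apply: leq_trans (size_scale_leq _ _) _; rewrite size_polyXn ltnS leq_exp2l //.
  by rewrite -ltnS prednK.
pose rs := [seq y u | u <- enum 'rV[F]_r].
have hall : all (root P) rs.
  by apply/allP => z /mapP [u _ ->]; rewrite /root hP yroot.
have hu : uniq rs by rewrite map_inj_uniq // enum_uniq.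
have := max_poly_roots Pnz hall hu.
have -> : size rs = (q ^ r)%N by rewrite size_map -cardE card_mx mul1n.
move=> /leq_trans/(_ hsize); rewrite ltnS leq_exp2l //; lia.
Qed.

End Gab.


Lemma abel3 (V : zmodType) (a b c : V) : -(a - b) + (- c + a + (c - b)) = 0.
Proof. by rewrite opprB addrA addrC !addrA subrK [c - a - c]addrAC subrr add0r addNr. Qed.

Section Blk.
Variables (R : fieldType) (tau N : nat).

Definition Tm (B : 'M[R]_(N, tau)) : 'M[R]_(tau + N) :=
  block_mx 1%:M B^T B (B *m B^T).

Lemma Tm_rank (B : 'M[R]_(N, tau)) : (\rank (Tm B) <= tau)%N.
Proof.
have -> : Tm B = col_mx 1%:M B *m row_mx 1%:M B^T.
  by rewrite mul_col_row !mulmx1 mul1mx.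
exact: leq_trans (mxrankM_maxl _ _) (rank_leq_col _).
Qed.

Lemma rank_anti m n (P : 'M[R]_(m, n)) (Q : 'M[R]_(n, m)) :
  \rank (block_mx 0 P Q 0) = (\rank P + \rank Q)%N.
Proof.
rewrite block_mxEv -addsmxE mxrank_disjoint_sum ?rank_row_mx0 ?rank_row_0mx//.
apply/eqP/rowV0P => v; rewrite sub_capmx => /andP[/submxP[x ->]].
rewrite mul_mx_row mulmx0 => /submxP[y]; rewrite mul_mx_row mulmx0.
by move=> /eq_row_mx[_ ->]; rewrite row_mx0.
Qed.

Lemma Tm_dist (B B' : 'M[R]_(N, tau)) : (2 * \rank (B - B')%R <= \rank (Tm B - Tm B')%R)%N.
Proof.
set P := block_mx 1%:M 0 (- B) 1%:M : 'M[R]_(tau + N).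
set Q := block_mx 1%:M (- B'^T) 0 1%:M : 'M[R]_(tau + N).
have E : P *m (Tm B - Tm B') *m Q = block_mx 0 (B - B')^T (B - B') 0.
  rewrite /Tm opp_block_mx add_block_mx /P /Q !mulmx_block.
  rewrite subrr !mul0mx !mulmx0 !mul1mx !mulmx1 !addr0 !add0r linearB /=.
  congr block_mx; first by rewrite mul0mx add0r linearB.
  rewrite mulmxN mulmxBl !mulNmx opprK.
  exact: abel3.
have := mxrankM_maxl (P *m (Tm B - Tm B')) Q.
rewrite E rank_anti mxrank_tr => h.
apply: leq_trans (leq_trans h (mxrankM_maxr _ _)); lia.
Qed.
End Blk.


Lemma castmxB (R : ringType) m1 m2 n1 n2 (e : (m1 = m2) * (n1 = n2)) (A A' : 'M[R]_(m1, n1)) :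
  castmx e (A - A') = castmx e A - castmx e A'.
Proof. by case: e => e1 e2; case: m2 / e1; case: n2 / e2; rewrite !castmx_id. Qed.

Lemma exmax (P : nat -> Prop) b : (exists v, P v) -> (forall v, P v -> (v <= b)%N) ->
  exists v, P v /\ forall w, P w -> (w <= v)%N.
Proof.
elim: b => [|b IH] [v0 Pv0] bnd.
  exists v0; split => // w Pw; by have := bnd w Pw; rewrite leqn0 => /eqP->.
case: (classic (P b.+1)) => Pb.
  by exists b.+1; split.
apply: IH; first by exists v0.
move=> v Pv; have := bnd v Pv; rewrite leq_eqVlt => /orP[/eqP E|//].
by move: Pv; rewrite E.
Qed.

Theorem theorem4 (F : finFieldType) (L : fieldExtType F) (q d tau n m : nat) :
  #|F| = q -> \dim {:L} = m ->
  ((d.-1)./2 + 1 <= tau)%N -> (tau < d)%N -> (d <= n)%N -> (n <= m)%N ->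
  (tau <= n - tau)%N ->
  exists (C : seq 'rV[L]_n) (r : 'rV[L]_n),
    [/\ uniq C, min_rank_dist_ge C d,
        (exists ymax : 'rV[L]_n,
           (forall y, (ball_count C tau y <= ball_count C tau ymax)%N) /\
           (ball_count C tau r <= ball_count C tau ymax)%N) &
        (q ^ ((n - tau) * (tau - (d.-1)./2)) <= ball_count C tau r)%N].
Proof.
move=> hq hm ht htd hdn hnm htn.
have hd2 : (d <= ((d.-1)./2 + 1) * 2)%N.
  have h := odd_double_half d.-1.
  have : (d.-1 <= 1 + ((d.-1)./2).*2)%N by rewrite -{1}h leq_add2r leq_b1.
  rewrite -muln2; lia.
move: ((d.-1)./2) ht hd2 => t ht hd2.
have [N hN] : exists N, n = (tau + N)%N by exists (n - tau)%N; lia.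
subst n.
have Npos : (0 < N)%N by lia.
have [K hK] := exK F Npos.
subst N m.
rewrite addKn.
have htau : (tau <= \dim {:K})%N by lia.
have eqm : (tau + \dim {:K} + (\dim {:L} - (tau + \dim {:K})) = \dim {:L})%N.
  by rewrite subnKC.
pose k := (tau - t)%N.
pose Mx (X : 'M[F]_(k, \dim {:K})) : 'M[F]_(\dim {:L}, tau + \dim {:K}) :=
  castmx (eqm, erefl (tau + \dim {:K})) (col_mx (Tm (BX tau X)) 0).
pose cw (X : 'M[F]_(k, \dim {:K})) : 'rV[L]_(tau + \dim {:K}) :=
  \row_j \sum_i Mx X i j *: (vbasis {:L})`_i.
have freeL : free (vbasis {:L}) by exact: basis_free (vbasisP _).
have coord_cw X : coordmx (cw X) = Mx X.
  apply/matrixP => i j; rewrite !mxE.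
  exact: (coord_sum_free (fun i0 => Mx X i0 j) i freeL).
have coordmxB (x y : 'rV[L]_(tau + \dim {:K})) : coordmx (x - y) = coordmx x - coordmx y.
  by apply/matrixP => i j; rewrite !mxE linearB.
have rkcw X X' : rk (cw X - cw X') = \rank (Tm (BX tau X) - Tm (BX tau X')).
  rewrite /rk coordmxB !coord_cw -castmxB (eqmx_cast _ _).1.
  by rewrite opp_col_mx add_col_mx oppr0 addr0 rank_col_mx0.
have rk0 X : (rk (cw X - 0) <= tau)%N.
  rewrite subr0 /rk coord_cw (eqmx_cast _ _).1 rank_col_mx0.
  exact: Tm_rank.
have dist X X' : X != X' -> (2 * (t + 1) <= rk (cw X - cw X'))%N.
  move=> ne; rewrite rkcw; apply: leq_trans (Tm_dist _ _); rewrite -BXB.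
  have := rank_BX htau (X := X - X'); rewrite subr_eq0 => /(_ ne).
  rewrite /k leq_pmul2l // addn1 => h; rewrite -(ltn_add2r (tau - t)); apply: leq_ltn_trans h; lia.
have cw_inj : injective cw.
  move=> X X' eq; apply/eqP; apply: contraT => ne.
  have := dist X X' ne; rewrite eq rkcw subrr mxrank0; lia.
exists (map cw (enum 'M[F]_(k, \dim {:K}))), 0.
have hball : ball_count (map cw (enum 'M[F]_(k, \dim {:K}))) tau 0
             = size (map cw (enum 'M[F]_(k, \dim {:K}))).
  apply/eqP; rewrite -all_count; apply/allP => x /mapP[X _ ->]; exact: rk0.
split.
- by rewrite map_inj_uniq // enum_uniq.
- move=> c1 c2 /mapP[X _ ->] /mapP[X' _ ->] ne.
  have ne' : X != X' by apply: contra ne => /eqP->.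
  by have := dist X X' ne'; apply: leq_trans; rewrite mulnC.
- have bnd : forall v, (exists y,
      ball_count (map cw (enum 'M[F]_(k, \dim {:K}))) tau y = v) ->
      (v <= size (map cw (enum 'M[F]_(k, \dim {:K}))))%N.
    by move=> v [y0 <-]; apply: count_size.
  have [v [[y hy] hmax]] := exmax (ex_intro _ _ (ex_intro _ 0 erefl)) bnd.
  exists y; split.
  + by move=> y'; rewrite hy; apply: hmax; exists y'.
  + by rewrite hy; apply: hmax; exists 0.
- by rewrite hball size_map -cardE card_mx hq mulnC.
Qed.
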